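(* Assume $\varphi'(t) > 0$ for all $t \in [-1,1]$ and that the graph defined by the weights $w_{ij} \geq 0$ is connected. Let $X \in \mathcal{M}$ be a critical point of $f$ at which the Riemannian Hessian is negative semidefinite. If there exists a nonzero $v \in \mathbb{R}^d$ with $X^\top v \geq 0$ entrywise (i.e., $x_1,\dots,x_n$ lie in a common closed hemisphere), then $X$ is a global maximum of $f$ (equivalently $x_1 = \cdots = x_n$). Such a vector $v$ exists whenever $\mathrm{rank}(X) < d$.
   Context: $d\geq 2$, $\mathcal{M} = (\mathbb{S}^{d-1})^n$ is the set of $X \in \mathbb{R}^{d\times n}$ with unit-norm columns $x_1,\dots,x_n$, a Riemannian submanifold of $\mathbb{R}^{d\times n}$ with the Frobenius metric. $\varphi:[-1,1]\to\mathbb{R}$ is twice continuously differentiable, $W$ is symmetric with $w_{ij}\ge0$, the graph has edge $\{i,j\}$ iff $w_{ij}>0$, and $f(X) = \frac12\sum_{i,j} w_{ij}\varphi(x_i^\top x_j)$. Gradient and Hessian are Riemannian. *)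

(* Defs.v *)
From HB Require Import structures.
From mathcomp Require Import all_boot all_order all_algebra.
From mathcomp Require Import all_classical all_reals all_analysis.
Set Implicit Arguments. Unset Strict Implicit. Unset Printing Implicit Defensive.
Import Order.TTheory GRing.Theory Num.Theory.
Import numFieldNormedType.Exports.
Local Open Scope ring_scope.

Section Defs.
Variables (R : realType) (d n : nat).

Definition frob (A B : 'M[R]_(d, n)) : R :=
  \sum_(k < d) \sum_(i < n) A k i * B k i.

Definition on_manifold (X : 'M[R]_(d, n)) : Prop :=
  forall i : 'I_n, \sum_(k < d) X k i ^+ 2 = 1.

Definition tangent (X U : 'M[R]_(d, n)) : Prop :=
  forall i : 'I_n, \sum_(k < d) X k i * U k i = 0.

Definition obj (W : 'M[R]_n) (phi : R -> R) (X : 'M[R]_(d, n)) : R :=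
  2^-1 * \sum_(i < n) \sum_(j < n) W i j * phi (\sum_(k < d) X k i * X k j).

Definition egrad (F : 'M[R]_(d, n) -> R) (X : 'M[R]_(d, n)) : 'M[R]_(d, n) :=
  \matrix_(k, i) derive1 (fun t : R => F (X + t *: delta_mx k i)) 0.

Definition proj (X G : 'M[R]_(d, n)) : 'M[R]_(d, n) :=
  \matrix_(k, i) (G k i - (\sum_(l < d) X l i * G l i) * X k i).

Definition rgrad (F : 'M[R]_(d, n) -> R) (X : 'M[R]_(d, n)) : 'M[R]_(d, n) :=
  proj X (egrad F X).

Definition ehess (F : 'M[R]_(d, n) -> R) (X U : 'M[R]_(d, n)) : 'M[R]_(d, n) :=
  \matrix_(k, i) derive1 (fun t : R => egrad F (X + t *: U) k i) 0.

Definition rhess (F : 'M[R]_(d, n) -> R) (X U : 'M[R]_(d, n)) : 'M[R]_(d, n) :=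
  proj X (ehess F X U)
  - \matrix_(k, i) ((\sum_(l < d) X l i * egrad F X l i) * U k i).

End Defs.

Definition graph_connected (R : realType) (n : nat) (W : 'M[R]_n) : Prop :=
  forall i j : 'I_n, connect [rel a b | 0 < W a b] i j.

(* Main.v *)
Require Import Defs.
From HB Require Import structures.
From mathcomp Require Import all_boot all_order all_algebra.
From mathcomp Require Import all_classical all_reals all_analysis.
From mathcomp Require Import ring lra.
Import Order.TTheory GRing.Theory Num.Theory.
Import numFieldNormedType.Exports.
Local Open Scope ring_scope.
Set Implicit Arguments.
Section S.
Variable R : realType.
Lemma is_derive_sumf n (h : 'I_n -> R -> R) (x : R) (dh : 'I_n -> R) :
  (forall i, is_derive x 1 (h i) (dh i)) ->
  is_derive x 1 (fun t => \sum_(i < n) h i t) (\sum_(i < n) dh i).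
Proof.
move=> H; have := is_derive_sum H.
suff -> : (\sum_(i < n) h i) = (fun t => \sum_(i < n) h i t) by [].
by apply/funext => t; rewrite fct_sumE.
Qed.
Lemma is_deriveMf (f g : R -> R) (x df dg : R) :
  is_derive x 1 f df -> is_derive x 1 g dg ->
  is_derive x 1 (fun t => f t * g t) (f x * dg + g x * df).
Proof. move=> a b; exact: (is_deriveM a b). Qed.
Lemma is_derive_comp1 (f g : R -> R) (x df : R) :
  is_derive x 1 f df -> derivable g (f x) 1 ->
  is_derive x 1 (fun t => g (f t)) (derive1 g (f x) * df).
Proof.
move=> hf hg.
have hdf : derivable f x 1 by case: hf.
apply: DeriveDef.
  apply/derivable1_diffP; apply: (@differentiable_comp _ _ _ _ f g).
  exact/derivable1_diffP. exact/derivable1_diffP.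
rewrite -derive1E -[fun t => _]/(g \o f) derive1_comp // [X in _ * X]derive1E.
by rewrite (derive_val (f:=f)).
Qed.
Lemma is_deriveDf (f g : R -> R) (x df dg : R) :
  is_derive x 1 f df -> is_derive x 1 g dg ->
  is_derive x 1 (fun t => f t + g t) (df + dg).
Proof. move=> a b; exact: (is_deriveD a b). Qed.
Lemma is_derive_lin (a b x : R) : is_derive x 1 (fun t => a + t * b) b.
Proof.
have h1 := is_deriveMf (is_derive_id x 1) (is_derive_cst b x 1).
have h2 := is_deriveDf (is_derive_cst a x 1) h1.
apply: is_derive_eq h2 _; by rewrite /= mulr0 !add0r mulr1.
Qed.

Variables (d n : nat).
Definition rho (Y : 'M[R]_(d, n)) i j := \sum_(l < d) Y l i * Y l j.
Definition bet (Y U : 'M[R]_(d, n)) i j := \sum_(l < d) (U l i * Y l j + Y l i * U l j).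

Lemma is_derive_entry (Y U : 'M[R]_(d, n)) l i :
  is_derive (0:R) (1:R) (fun t : R => (Y + t *: U) l i) (U l i).
Proof.
have -> : (fun t : R => (Y + t *: U) l i) = (fun t => Y l i + t * U l i).
  by apply/funext => t; rewrite !mxE.
exact: is_derive_lin.
Qed.

Lemma is_derive_rho (Y U : 'M[R]_(d, n)) i j :
  is_derive (0:R) (1:R) (fun t : R => rho (Y + t *: U) i j) (bet Y U i j).
Proof.
apply: is_derive_sumf => l.
apply: is_derive_eq (is_deriveMf (is_derive_entry Y U l i) (is_derive_entry Y U l j)) _.
by rewrite scale0r addr0 addrC; congr (_ + _); rewrite mulrC.
Qed.

Lemma is_derive_obj (W : 'M[R]_n) (phi : R -> R) (Y U : 'M[R]_(d, n)) :
  (forall x, derivable phi x 1) ->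
  is_derive (0:R) (1:R) (fun t : R => obj W phi (Y + t *: U))
    (2^-1 * \sum_(a < n) \sum_(b < n) W a b * (derive1 phi (rho Y a b) * bet Y U a b)).
Proof.
move=> hphi.
apply: is_derive_eq.
  apply: (is_deriveMf (is_derive_cst _ _ _)).
  apply: is_derive_sumf => a; apply: is_derive_sumf => b.
  apply: (is_deriveMf (is_derive_cst _ _ _)).
  exact: (is_derive_comp1 (is_derive_rho Y U a b)).
rewrite /= mulr0 addr0; congr (_ * _); apply: eq_bigr => a _; apply: eq_bigr => b _.
by rewrite mulr0 addr0 scale0r addr0.
Qed.

Lemma sum_kron (F : 'I_d -> R) k : \sum_(l < d) (l == k)%:R * F l = F k.
Proof.
rewrite (bigD1 k) //= eqxx mul1r big1 ?addr0 // => l /negbTE ->; by rewrite mul0r.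
Qed.
Lemma sum_kron_n (F : 'I_n -> R) k : \sum_(l < n) (l == k)%:R * F l = F k.
Proof.
rewrite (bigD1 k) //= eqxx mul1r big1 ?addr0 // => l /negbTE ->; by rewrite mul0r.
Qed.

Lemma rhoC (Y : 'M[R]_(d, n)) i j : rho Y i j = rho Y j i.
Proof. by apply: eq_bigr => l _; rewrite mulrC. Qed.

Lemma bet_delta (Y : 'M[R]_(d, n)) k i a b :
  bet Y (delta_mx k i) a b = (a == i)%:R * Y k b + (b == i)%:R * Y k a.
Proof.
rewrite /bet big_split /=; congr (_ + _).
  rewrite -(sum_kron (fun l => (a == i)%:R * Y l b)); apply: eq_bigr => l _.
  by rewrite mxE -mulnb natrM mulrA.
rewrite -(sum_kron (fun l => (b == i)%:R * Y l a)); apply: eq_bigr => l _.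
by rewrite mxE -mulnb natrM mulrC mulrA.
Qed.

Lemma egradE (W : 'M[R]_n) (phi : R -> R) (Y : 'M[R]_(d, n)) k i :
  W^T = W -> (forall x, derivable phi x 1) ->
  egrad (obj W phi) Y k i = \sum_(j < n) W i j * derive1 phi (rho Y i j) * Y k j.
Proof.
move=> WT hphi.
have hd := is_derive_obj W Y (delta_mx k i) hphi.
rewrite /egrad mxE derive1E derive_val.
under eq_bigr => a _ do under eq_bigr => b _ do rewrite bet_delta mulrDr mulrDr.
under eq_bigr => a _ do rewrite big_split /=. rewrite big_split /=.
have -> : \sum_(a < n) \sum_(b < n) W a b * (derive1 phi (rho Y a b) * ((a == i)%:R * Y k b))
   = \sum_(j < n) W i j * derive1 phi (rho Y i j) * Y k j.
  rewrite -(sum_kron_n (fun a => \sum_(b < n) W a b * derive1 phi (rho Y a b) * Y k b)).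
  apply: eq_bigr => a _; rewrite mulr_sumr; apply: eq_bigr => b _.
  by ring.
have -> : \sum_(a < n) \sum_(b < n) W a b * (derive1 phi (rho Y a b) * ((b == i)%:R * Y k a))
   = \sum_(j < n) W i j * derive1 phi (rho Y i j) * Y k j.
  apply: eq_bigr => a _.
  rewrite (bigD1 i) //= eqxx mul1r big1 ?addr0; last first.
    by move=> b /negbTE ->; rewrite mul0r !mulr0.
  have -> : W a i = W i a by rewrite -[in LHS]WT mxE.
  by rewrite rhoC; ring.
set S := (X in X + X); rewrite -/S; by field.
Qed.

Lemma ehessE (W : 'M[R]_n) (phi : R -> R) (X U : 'M[R]_(d, n)) k i :
  W^T = W -> (forall x, derivable phi x 1) -> (forall x, derivable (derive1 phi) x 1) ->
  ehess (obj W phi) X U k i = \sum_(j < n) W i j *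
     (derive1 (derive1 phi) (rho X i j) * bet X U i j * X k j + derive1 phi (rho X i j) * U k j).
Proof.
move=> WT hphi hphi'.
rewrite /ehess mxE.
have -> : (fun t : R => egrad (obj W phi) (X + t *: U) k i) =
  (fun t : R => \sum_(j < n) W i j * derive1 phi (rho (X + t *: U) i j) * (X + t *: U) k j).
  by apply/funext => t; rewrite egradE.
have hd : is_derive (0:R) (1:R)
  (fun t : R => \sum_(j < n) W i j * derive1 phi (rho (X + t *: U) i j) * (X + t *: U) k j)
  (\sum_(j < n) W i j *
     (derive1 (derive1 phi) (rho X i j) * bet X U i j * X k j + derive1 phi (rho X i j) * U k j)).
  apply: is_derive_sumf => j.
  apply: is_derive_eq.
    apply: is_deriveMf; last exact: is_derive_entry.
    apply: (is_deriveMf (is_derive_cst _ _ _)).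
    exact: (is_derive_comp1 (is_derive_rho X U i j)).
  rewrite /=; change (mx_val W (i, j)) with (W i j); rewrite !scale0r !addr0 mulr0 addr0; ring.
by rewrite derive1E derive_val.
Qed.

Lemma sq_expand (X : 'M[R]_(d, n)) i j (s : R) :
  \sum_(l < d) (X l i + s * X l j) ^+ 2 =
  \sum_(l < d) X l i ^+ 2 + s ^+ 2 * \sum_(l < d) X l j ^+ 2 + 2 * s * rho X i j.
Proof.
rewrite /rho !mulr_sumr -!big_split /=; apply: eq_bigr => l _; ring.
Qed.

Lemma rho_bounds (X : 'M[R]_(d, n)) : on_manifold X -> forall i j, -1 <= rho X i j <= 1.
Proof.
move=> hX i j.
have h1 := sq_expand X i j 1; have h2 := sq_expand X i j (-1).
rewrite !hX in h1 h2.
have g1 : 0 <= \sum_(l < d) (X l i + 1 * X l j) ^+ 2 by apply: sumr_ge0 => l _; exact: sqr_ge0.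
have g2 : 0 <= \sum_(l < d) (X l i + -1 * X l j) ^+ 2 by apply: sumr_ge0 => l _; exact: sqr_ge0.
rewrite h1 in g1; rewrite h2 in g2.
apply/andP; split; nra.
Qed.

Lemma col_eq (X : 'M[R]_(d, n)) : on_manifold X -> forall i j, rho X i j = 1 ->
  forall l, X l i = X l j.
Proof.
move=> hX i j h1 l.
have h := sq_expand X i j (-1); rewrite !hX h1 in h.
have h0 : \sum_(l < d) (X l i + -1 * X l j) ^+ 2 = 0 by rewrite h; ring.
have := psumr_eq0P (fun l _ => sqr_ge0 (X l i + -1 * X l j)) h0.
move=> /(_ l isT).
by move/eqP; rewrite sqrf_eq0 mulN1r subr_eq0 => /eqP.
Qed.

Definition Uof (X : 'M[R]_(d, n)) (v : 'I_d -> R) (c : 'I_n -> R) : 'M[R]_(d, n) :=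
  \matrix_(k, i) (v k - c i * X k i).

Lemma bet_U (X : 'M[R]_(d, n)) (v : 'I_d -> R) (c : 'I_n -> R) : (forall i, \sum_(l < d) X l i * v l = c i) -> forall i j,
  bet X (Uof X v c) i j = c j + c i - (c i + c j) * rho X i j.
Proof.
move=> cE i j; rewrite /bet; under eq_bigr => l _ do rewrite !mxE.
have -> : \sum_(l < d) ((v l - c i * X l i) * X l j + X l i * (v l - c j * X l j)) =
  \sum_(l < d) (X l j * v l + X l i * v l) - (c i + c j) * rho X i j.
  by rewrite /rho mulr_sumr -sumrB; apply: eq_bigr => l _; ring.
by rewrite big_split /= !cE.
Qed.

Lemma tangent_U (X : 'M[R]_(d, n)) (v : 'I_d -> R) (c : 'I_n -> R) : on_manifold X -> (forall i, \sum_(l < d) X l i * v l = c i) ->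
  tangent X (Uof X v c).
Proof.
move=> hX cE i; under eq_bigr => l _ do rewrite !mxE.
have -> : \sum_(l < d) X l i * (v l - c i * X l i) =
  \sum_(l < d) X l i * v l - c i * \sum_(l < d) X l i ^+ 2.
  by rewrite mulr_sumr -sumrB; apply: eq_bigr => l _; ring.
by rewrite cE hX; ring.
Qed.

Lemma UU_formula (X : 'M[R]_(d, n)) (v : 'I_d -> R) (c : 'I_n -> R) : on_manifold X -> (forall i, \sum_(l < d) X l i * v l = c i) ->
  forall i j, \sum_(k < d) Uof X v c k i * Uof X v c k j =
  \sum_(k < d) v k ^+ 2 - c i ^+ 2 - c j ^+ 2 + c i * c j * rho X i j.
Proof.
move=> hX cE i j; under eq_bigr => l _ do rewrite !mxE.
have -> : \sum_(l < d) (v l - c i * X l i) * (v l - c j * X l j) =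
  \sum_(l < d) v l ^+ 2 - c i * \sum_(l < d) X l i * v l - c j * \sum_(l < d) X l j * v l
  + c i * c j * rho X i j.
  rewrite /rho !mulr_sumr -!sumrB -big_split /=; apply: eq_bigr => l _; ring.
by rewrite !cE; ring.
Qed.

Lemma rhessE (F : 'M[R]_(d, n) -> R) (X U : 'M[R]_(d, n)) k i :
  rhess F X U k i = ehess F X U k i - (\sum_(l < d) X l i * ehess F X U l i) * X k i
    - (\sum_(l < d) X l i * egrad F X l i) * U k i.
Proof. by rewrite /rhess /proj !mxE. Qed.
End S.
Arguments rho {R d n}. Arguments rhoC {R d n}. Arguments bet {R d n}. Arguments Uof {R d n}.

Unset Implicit Arguments.

Theorem mainTheorem11 (R : realType) (d n : nat) (phi : R -> R)
    (W : 'M[R]_n) (X : 'M[R]_(d, n)) :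
  (2 <= d)%N ->
  (* phi is C^2 *)
  (forall x : R, derivable phi x 1) ->
  (forall x : R, derivable (derive1 phi) x 1) ->
  continuous (derive1 (derive1 phi)) ->
  (* W symmetric, nonnegative, connected graph *)
  W^T = W -> (forall i j, 0 <= W i j) -> graph_connected W ->
  (* phi' > 0 on [-1,1] *)
  (forall t : R, -1 <= t <= 1 -> 0 < derive1 phi t) ->
  (* X is a critical point with negative semidefinite Riemannian Hessian *)
  on_manifold X ->
  rgrad (@obj R d n W phi) X = 0 ->
  (forall U, tangent X U -> frob U (rhess (@obj R d n W phi) X U) <= 0) ->
  ((exists v : 'cV[R]_d, v != 0 /\ forall i, 0 <= (X^T *m v) i 0) ->
     (forall Y, on_manifold Y -> @obj R d n W phi Y <= @obj R d n W phi X) /\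
     (forall i j : 'I_n, col i X = col j X))
  /\
  ((\rank X < d)%N -> exists v : 'cV[R]_d, v != 0 /\ forall i, 0 <= (X^T *m v) i 0).
Proof.
move=> d2 hphi hphi' _ WT W0 conn hpos hX hcrit hhess.
split; last first.
  move=> hr.
  pose K := kermx X.
  have Kn0 : K != 0.
    apply/negP => /eqP K0.
    have := mxrank_ker X; rewrite -/K K0 mxrank0 => /esym/eqP.
    by rewrite subn_eq0 leqNgt hr.
  have [r hr0] : exists r, row r K != 0.
    apply/existsP; apply: contraR Kn0; rewrite negb_exists => /forallP h.
    apply/eqP/row_matrixP => r; rewrite row0; exact/eqP/negPn/h.
  exists (row r K)^T; split.
    apply: contra hr0 => /eqP h; apply/eqP.
    by rewrite -[row r K]trmxK h trmx0.
  move=> i.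
  have -> : X^T *m (row r K)^T = (row r (K *m X))^T by rewrite row_mul trmx_mul.
  by rewrite mulmx_ker row0 trmx0 mxE.
have rb := rho_bounds hX.
pose a i j := W i j * derive1 phi (rho X i j).
have a0 : forall i j, 0 <= a i j.
  move=> i j; apply: mulr_ge0 => //; apply: ltW; exact: hpos (rb i j).
have aC : forall i j, a i j = a j i.
  by move=> i j; rewrite /a rhoC -[in LHS]WT mxE.
have apos : forall i j, 0 < W i j -> 0 < a i j.
  move=> i j Wp; apply: mulr_gt0 => //; exact: hpos (rb i j).
have G : forall k i, egrad (obj W phi) X k i = \sum_(j < n) a i j * X k j.
  by move=> k i; rewrite egradE.
have crit : forall k i, egrad (obj W phi) X k i =
    (\sum_(l < d) X l i * egrad (obj W phi) X l i) * X k i.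
  move=> k i; have := congr1 (fun M : 'M[R]_(d, n) => M k i) hcrit; rewrite /rgrad /proj !mxE => /eqP.
  by rewrite subr_eq0 => /eqP.
have mu : forall i, \sum_(l < d) X l i * egrad (obj W phi) X l i =
    \sum_(j < n) a i j * rho X i j.
  move=> i; under eq_bigr => l _ do rewrite G mulr_sumr.
  rewrite exchange_big /=; apply: eq_bigr => j _; rewrite /rho mulr_sumr.
  by apply: eq_bigr => l _; ring.
case=> v [v0 hv].
pose vv k := v k 0.
pose c i := \sum_(l < d) X l i * vv l.
have cE : forall i, \sum_(l < d) X l i * vv l = c i by [].
have c0 : forall i, 0 <= c i.
  move=> i; have := hv i; rewrite mxE.
  by under eq_bigr => l _ do rewrite mxE.
have E0 : forall i, \sum_(j < n) a i j * c j = (\sum_(j < n) a i j * rho X i j) * c i.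
  move=> i; transitivity (\sum_(k < d) egrad (obj W phi) X k i * vv k).
    under eq_bigr => j _ do rewrite /c mulr_sumr.
    rewrite exchange_big /=; apply: eq_bigr => k _; rewrite G mulr_suml.
    by apply: eq_bigr => j _; ring.
  under eq_bigr => k _ do rewrite crit.
  by rewrite -mu /c mulr_sumr; apply: eq_bigr => k _; ring.
have E1sum : \sum_(i < n) \sum_(j < n) a i j * c i * (1 - rho X i j) = 0.
  have S1 : \sum_(i < n) \sum_(j < n) a i j * c j = \sum_(i < n) \sum_(j < n) a i j * c i.
    by rewrite exchange_big; apply: eq_bigr => i _; apply: eq_bigr => j _; rewrite aC.
  transitivity (\sum_(i < n) (\sum_(j < n) a i j * c i - \sum_(j < n) a i j * c j)).
    apply: eq_bigr => i _; rewrite E0 mulr_suml -sumrB.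
    by apply: eq_bigr => j _; ring.
  by rewrite sumrB S1 subrr.
have nn : forall i j, 0 <= a i j * c i * (1 - rho X i j).
  move=> i j; apply: mulr_ge0; first exact: mulr_ge0.
  by rewrite subr_ge0; case/andP: (rb i j).
have E1 : forall i j, a i j * c i * (1 - rho X i j) = 0.
  move=> i j.
  have := psumr_eq0P (fun i _ => sumr_ge0 _ (fun j _ => nn i j)) E1sum.
  move=> /(_ i isT) h.
  have := psumr_eq0P (fun j _ => nn i j) h.
  by move=> /(_ j isT).
have edgeC : forall i j, a i j != 0 ->
    c i * (1 - rho X i j) = 0 /\ c j * (1 - rho X i j) = 0.
  move=> i j an; split.
    by have := E1 i j; rewrite -mulrA => /eqP; rewrite mulf_eq0 (negbTE an) /= => /eqP.
  have := E1 j i; rewrite -aC rhoC -mulrA => /eqP.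
  by rewrite mulf_eq0 (negbTE an) /= => /eqP.
pose U := Uof X vv c.
have tU : tangent X U := tangent_U vv c hX cE.
have hb : forall i j, W i j * bet X U i j = 0.
  move=> i j; have [W0' | Wn] := eqVneq (W i j) 0; first by rewrite W0' mul0r.
  have an : a i j != 0.
    by rewrite gt_eqF // apos // lt_def Wn W0.
  have [h1 h2] := edgeC i j an.
  rewrite (bet_U X vv c cE).
  have -> : c j + c i - (c i + c j) * rho X i j = c i * (1 - rho X i j) + c j * (1 - rho X i j)
    by ring.
  by rewrite h1 h2 addr0 mulr0.
have EH : forall k i, ehess (obj W phi) X U k i = \sum_(j < n) a i j * U k j.
  move=> k i; rewrite ehessE //; apply: eq_bigr => j _.
  rewrite mulrDr.
  have -> : W i j * (derive1 (derive1 phi) (rho X i j) * bet X U i j * X k j) =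
    (W i j * bet X U i j) * (derive1 (derive1 phi) (rho X i j) * X k j) by ring.
  by rewrite hb mul0r add0r /a mulrA.
pose V := \sum_(k < d) vv k ^+ 2.
pose UU i j := \sum_(k < d) U k i * U k j.
have UUE : forall i j, UU i j = V - c i ^+ 2 - c j ^+ 2 + c i * c j * rho X i j.
  by move=> i j; rewrite /UU (UU_formula vv c hX cE).
have rii : forall i, rho X i i = 1.
  by move=> i; rewrite -(hX i); apply: eq_bigr => l _; rewrite expr2.
have step : forall i, \sum_(k < d) U k i * rhess (obj W phi) X U k i =
    \sum_(j < n) a i j * (UU i j - rho X i j * UU i i).
  move=> i.
  pose s := \sum_(l < d) X l i * ehess (obj W phi) X U l i.
  have tg : \sum_(k < d) X k i * U k i = 0 := tU i.
  transitivity (\sum_(k < d) (U k i * (\sum_(j < n) a i j * U k j))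
      - s * \sum_(k < d) X k i * U k i - (\sum_(j < n) a i j * rho X i j) * UU i i).
    rewrite /UU !mulr_sumr -!sumrB; apply: eq_bigr => k _.
    rewrite rhessE -/s EH mu; ring.
  rewrite tg mulr0 subr0 mulr_suml.
  under eq_bigr => k _ do rewrite mulr_sumr.
  rewrite exchange_big /= -sumrB; apply: eq_bigr => j _.
  rewrite mulrBr mulrA; congr (_ - _); rewrite /UU mulr_sumr; apply: eq_bigr => k _; ring.
have term : forall i j, a i j * (UU i j - rho X i j * UU i i) = a i j * (V * (1 - rho X i j)).
  move=> i j; have [-> | an] := eqVneq (a i j) 0; first by rewrite !mul0r.
  have [h1 h2] := edgeC i j an.
  congr (_ * _); rewrite !UUE rii.
  have [r1 | r1] := eqVneq (rho X i j) 1.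
    have cij : c i = c j.
      by rewrite /c; apply: eq_bigr => l _; rewrite (col_eq hX r1).
    rewrite r1 cij; ring.
  have r1' : 1 - rho X i j != 0 by rewrite subr_eq0 eq_sym.
  have ci : c i = 0 by apply/eqP; move: h1 => /eqP; rewrite mulf_eq0 (negbTE r1') orbF.
  have cj : c j = 0 by apply/eqP; move: h2 => /eqP; rewrite mulf_eq0 (negbTE r1') orbF.
  rewrite ci cj; ring.
have frobE : frob U (rhess (obj W phi) X U) =
    \sum_(i < n) \sum_(j < n) a i j * (V * (1 - rho X i j)).
  rewrite /frob exchange_big /=; apply: eq_bigr => i _.
  by rewrite step; apply: eq_bigr => j _; rewrite term.
have V0 : 0 < V.
  rewrite lt_def; apply/andP; split; last by apply: sumr_ge0 => k _; exact: sqr_ge0.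
  apply/negP => /eqP V0; move/negP: v0; apply; apply/eqP/matrixP => k z.
  rewrite (ord1 z) mxE.
  have := psumr_eq0P (fun k _ => sqr_ge0 (vv k)) V0.
  by move=> /(_ k isT) /eqP; rewrite sqrf_eq0 => /eqP.
have nn2 : forall i j, 0 <= a i j * (V * (1 - rho X i j)).
  move=> i j; apply: mulr_ge0 => //; apply: mulr_ge0; first exact: ltW.
  by rewrite subr_ge0; case/andP: (rb i j).
have S0 : \sum_(i < n) \sum_(j < n) a i j * (V * (1 - rho X i j)) = 0.
  apply/eqP; rewrite eq_le; apply/andP; split.
    by rewrite -frobE; exact: hhess.
  by apply: sumr_ge0 => i _; apply: sumr_ge0 => j _.
have edge1 : forall i j, 0 < W i j -> rho X i j = 1.
  move=> i j Wp.
  have := psumr_eq0P (fun i _ => sumr_ge0 _ (fun j _ => nn2 i j)) S0.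
  move=> /(_ i isT) h.
  have := psumr_eq0P (fun j _ => nn2 i j) h.
  move=> /(_ j isT) /eqP; rewrite mulf_eq0 (gt_eqF (apos _ _ Wp)) /= mulf_eq0 (gt_eqF V0) /=.
  by rewrite subr_eq0 => /eqP.
have edge : forall i j, 0 < W i j -> col i X = col j X.
  move=> i j Wp; apply/matrixP => l z; rewrite !mxE.
  exact: (col_eq hX (edge1 _ _ Wp)).
have allc : forall i j : 'I_n, col i X = col j X.
  move=> i j; have := conn i j; case/connectP => p.
  elim: p i => [|m p IH] i /=; first by move=> _ ->.
  case/andP => e pth lst; rewrite (edge i m e); exact: IH pth lst.
split => //.
have rX1 : forall i j, rho X i j = 1.
  move=> i j; rewrite -(hX i); apply: eq_bigr => l _; rewrite expr2.
  by have := congr1 (fun M : 'cV[R]_d => M l 0) (allc i j); rewrite !mxE => ->.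
have mono : forall t, -1 <= t <= 1 -> phi t <= phi 1.
  move=> t /andP [t1 t2].
  apply: (@ger0_derive1_ndecr R phi (-1) 1) => //.
  - move=> x; rewrite in_itv /= => /andP [x1 x2]; apply: ltW; apply: hpos.
    by apply/andP; split; apply: ltW.
  - apply: derivable_within_continuous => x _; exact: hphi.
move=> Y hY; rewrite /obj; apply: ler_wpM2l; first by rewrite invr_ge0.
apply: ler_sum => i _; apply: ler_sum => j _.
have -> : \sum_(k < d) X k i * X k j = 1 by exact: rX1.
apply: ler_wpM2l => //; apply: mono; exact: (rho_bounds hY i j).
Qed.
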